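(* Let $A\in M_n(\mathbb{FT})$ and let $G$ and $H$ be units of $M_n(\mathbb{T})$ which commute with $A$ (under tropical multiplication). Suppose $G$ and $H$ both have maximum cycle mean $0$. Then $G\otimes H$ has maximum cycle mean $0$.
   Context: $\mathbb{FT}$ is $\mathbb{R}$ with $a\oplus b=\max(a,b)$, $a\otimes b=a+b$; $\mathbb{T}=\mathbb{R}\cup\{-\infty\}$ with the obvious extensions. Matrices multiply by $(A\otimes B)_{i,j}=\bigoplus_k A_{i,k}\otimes B_{k,j}$. Units of the monoid $M_n(\mathbb{T})$ are the matrices with exactly one entry different from $-\infty$ in each row and column. For $B\in M_n(\mathbb{T})$, $\Gamma_B$ is the weighted digraph on $\{1,\dots,n\}$ with an edge $j\to i$ of weight $B_{i,j}$ whenever $B_{i,j}\neq-\infty$; the maximum cycle mean of $B$ is the maximum, over all closed paths in $\Gamma_B$, of the arithmetic mean of the edge weights. *)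

(* Defs.v *)
(* Tropical semiring T = R ∪ {-oo} modelled as option R,
   with None = -oo; FT = R. *)
From HB Require Import structures.
From mathcomp Require Import all_boot all_order all_algebra.
From mathcomp Require Import reals.
Set Implicit Arguments. Unset Strict Implicit. Unset Printing Implicit Defensive.
Import Order.TTheory GRing.Theory Num.Theory.
Local Open Scope ring_scope.

Section Tropical.
Variable R : realType.

Definition tadd (a b : option R) : option R :=
  match a, b with
  | None, _ => b
  | _, None => a
  | Some x, Some y => Some (Num.max x y)
  end.

Definition tmul (a b : option R) : option R :=
  match a, b with
  | Some x, Some y => Some (x + y)
  | _, _ => None
  end.

Definition tmx_mul n (A B : 'M[option R]_n) : 'M[option R]_n :=
  \matrix_(i, j) \big[tadd/None]_(k < n) tmul (A i k) (B k j).

Definition tmx_one n : 'M[option R]_n :=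
  \matrix_(i, j) if i == j then Some 0 else None.

Definition tunit n (G : 'M[option R]_n) : Prop :=
  exists K : 'M[option R]_n, tmx_mul G K = tmx_one n /\ tmx_mul K G = tmx_one n.

Definition ft_mx n (A : 'M[R]_n) : 'M[option R]_n := map_mx Some A.

(* A closed path of length k >= 1 in Gamma_B: vertices f 0, ..., f k = f 0,
   with edges f t -> f (t+1), i.e. B (f t.+1) (f t) <> -oo. *)
Definition closed_path n (B : 'M[option R]_n) (k : nat) (f : nat -> 'I_n) : Prop :=
  (0 < k)%N /\ f k = f 0%N /\ (forall t, (t < k)%N -> B (f t.+1) (f t) <> None).

Definition path_mean n (B : 'M[option R]_n) (k : nat) (f : nat -> 'I_n) : R :=
  (\sum_(t < k) odflt 0 (B (f t.+1) (f t))) / k%:R.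

Definition max_cycle_mean_is n (B : 'M[option R]_n) (m : R) : Prop :=
  (exists k f, closed_path B k f /\ path_mean B k f = m) /\
  (forall k f, closed_path B k f -> path_mean B k f <= m).

End Tropical.

(* Main.v *)
From HB Require Import structures.
Require Import Defs.
From mathcomp Require Import all_boot all_order all_fingroup all_algebra.
From mathcomp Require Import reals.
From mathcomp Require Import ring lra.
Set Implicit Arguments. Unset Strict Implicit. Unset Printing Implicit Defensive.
Import Order.TTheory GRing.Theory Num.Theory.
Local Open Scope ring_scope.

Section S.
Variable R : realType.
Variable n : nat.
Variable A : 'M[R]_n.

Lemma tadd_None_l (a : option R) : tadd None a = a. Proof. by case: a. Qed.
Lemma tadd_None_r (a : option R) : tadd a None = a. Proof. by case: a. Qed.
Lemma tadd_idem (a : option R) : tadd a a = a.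
Proof. by case: a => //= x; rewrite maxxx. Qed.

Lemma big_tadd_seq (I : eqType) (r : seq I) (F : I -> option R) k0 :
  (forall k, k != k0 -> F k = None) ->
  \big[@tadd R/None]_(k <- r) F k = if k0 \in r then F k0 else None.
Proof.
move=> HF; elim: r => [|x r IH]; first by rewrite big_nil.
rewrite big_cons IH in_cons.
have [->|nx] := eqVneq x k0.
  by rewrite /=; case: (k0 \in r); [rewrite tadd_idem | rewrite tadd_None_r].
by rewrite /= HF // tadd_None_l.
Qed.

Lemma big_tadd1 (F : 'I_n -> option R) k0 :
  (forall k, k != k0 -> F k = None) -> \big[@tadd R/None]_(k < n) F k = F k0.
Proof. by move=> HF; rewrite (big_tadd_seq _ HF) mem_index_enum. Qed.

Lemma big_tadd_ex (I : eqType) (r : seq I) (F : I -> option R) :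
  \big[@tadd R/None]_(k <- r) F k != None -> exists k, F k != None.
Proof.
elim: r => [|x r IH]; first by rewrite big_nil.
rewrite big_cons; case E: (F x) => [a|]; first by exists x; rewrite E.
by rewrite tadd_None_l.
Qed.

Lemma big_tadd_all (I : eqType) (r : seq I) (F : I -> option R) k :
  k \in r -> F k != None -> \big[@tadd R/None]_(k <- r) F k != None.
Proof.
elim: r => [|x r IH] //; rewrite in_cons big_cons => /orP [/eqP <- Fk|kr Fk].
  by case: (F k) Fk => // a _; case: (\big[@tadd R/None]_(k0 <- r) F k0).
by move: (IH kr Fk); case: (F x) => // a; case: (\big[@tadd R/None]_(k0 <- r) F k0).
Qed.

Lemma tmulP (a b : option R) : tmul a b != None -> a != None /\ b != None.
Proof. by case: a; case: b. Qed.

Definition Mono (B : 'M[option R]_n) (s : {perm 'I_n}) (w : 'I_n -> R) :=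
  forall i j, B i j = if i == s j then Some (w j) else None.

Lemma unit_mono G : tunit G -> exists (s : {perm 'I_n}) (g : 'I_n -> R), Mono G s g.
Proof.
move=> [K [GK KG]].
have dGK i : exists k, (G i k != None) && (K k i != None).
  have : tmx_mul G K i i != None by rewrite GK mxE eqxx.
  rewrite mxE => /big_tadd_ex [k /tmulP [h1 h2]]; exists k; rewrite h1 h2.
  done.
have dKG i : exists k, (K i k != None) && (G k i != None).
  have : tmx_mul K G i i != None by rewrite KG mxE eqxx.
  rewrite mxE => /big_tadd_ex [k /tmulP [h1 h2]]; exists k; rewrite h1 h2.
  done.
have oGK i j k : i != j -> G i k != None -> K k j = None.
  move=> ij h; apply/eqP; apply: contraT => h2.
  have : tmx_mul G K i j != None.
    rewrite mxE; apply: (big_tadd_all (k := k)); first exact: mem_index_enum.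
    by move: h h2; case: (G i k); case: (K k j).
  by rewrite GK mxE (negbTE ij).
have oKG i j k : i != j -> K i k != None -> G k j = None.
  move=> ij h; apply/eqP; apply: contraT => h2.
  have : tmx_mul K G i j != None.
    rewrite mxE; apply: (big_tadd_all (k := k)); first exact: mem_index_enum.
    by move: h h2; case: (K i k); case: (G k j).
  by rewrite KG mxE (negbTE ij).
have colu l i i' : G i l != None -> G i' l != None -> i = i'.
  move=> h1 h2; have [m /andP [hK _]] := dKG l.
  have e x : G x l != None -> x = m.
    move=> hx; apply/eqP; apply: contraT => ne.
    by move: hK; rewrite (oGK _ _ _ ne hx).
  by rewrite (e _ h1) (e _ h2).
have rowu i k k' : G i k != None -> G i k' != None -> k = k'.
  move=> h1 h2; have [m /andP [_ hK]] := dGK i.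
  have e x : G i x != None -> x = m.
    move=> hx; apply/eqP; rewrite eq_sym; apply: contraT => ne.
    by move: hx; rewrite (oKG _ _ _ ne hK).
  by rewrite (e _ h1) (e _ h2).
pose s l := odflt l [pick i | G i l != None].
have sP l : G (s l) l != None.
  rewrite /s; case: pickP => [x //|h].
  have [m /andP [_ hG]] := dKG l; by move: (h m); rewrite hG.
have sinj : injective s.
  by move=> l l' e; apply: (rowu (s l)); rewrite // e.
exists (perm sinj), (fun j => odflt 0 (G (s j) j)) => i j.
rewrite permE; have [->|ne] := eqVneq i (s j).
  by move: (sP j); case: (G (s j) j).
apply/eqP; apply: contraT => h; by move: ne; rewrite (colu _ _ _ h (sP j)) eqxx.
Qed.

Lemma comm_rel G s g : Mono G s g ->
  tmx_mul (ft_mx A) G = tmx_mul G (ft_mx A) ->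
  forall i j, A (s i) (s j) + g j = g i + A i j.
Proof.
move=> HG HC i j.
have := congr1 (fun M : 'M_n => M (s i) j) HC; rewrite /= !mxE.
rewrite (big_tadd1 (k0 := s j)); last first.
  by move=> k nk; rewrite HG (negbTE nk); case: (ft_mx A (s i) k).
rewrite (big_tadd1 (k0 := i)); last first.
  move=> k nk; rewrite HG.
  have -> : (s i == s k) = false by apply/negbTE; rewrite (inj_eq perm_inj) eq_sym.
  done.
by rewrite /ft_mx !mxE !HG !eqxx /= => -[] ->; lra.
Qed.

Definition Sm (s : {perm 'I_n}) (w : 'I_n -> R) a t :=
  \sum_(u < t) w (iter u s a).

Section Orb.
Variables (s : {perm 'I_n}) (w : 'I_n -> R).
Hypothesis rel : forall i j, A (s i) (s j) + w j = w i + A i j.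

Lemma iterRel t i j :
  A (iter t s i) (iter t s j) + Sm s w j t = Sm s w i t + A i j.
Proof.
elim: t => [|t IH]; first by rewrite /Sm !big_ord0 /=; lra.
rewrite /Sm !big_ord_recr /= -/(Sm s w j t) -/(Sm s w i t).
have := rel (iter t s i) (iter t s j); move: IH; lra.
Qed.

Lemma iter_mul k m a : iter k s a = a -> iter (m * k) s a = a.
Proof.
move=> h; elim: m => [|m IH] //; by rewrite mulSn iterD IH h.
Qed.

Lemma periodic k m a : iter k s a = a -> Sm s w a (m * k) = m%:R * Sm s w a k.
Proof.
move=> h; elim: m => [|m IH]; first by rewrite mul0n /Sm big_ord0 mul0r.
rewrite mulSnr /Sm big_split_ord /= -/(Sm s w a (m * k)) IH.
rewrite (eq_bigr (fun u : 'I_k => w (iter u s a))); last first.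
  by move=> u _; rewrite addnC iterD iter_mul.
rewrite -/(Sm s w a k) -natr1; lra.
Qed.

Lemma eq_means a b k k' : iter k s a = a -> iter k' s b = b ->
  k'%:R * Sm s w a k = k%:R * Sm s w b k'.
Proof.
move=> ha hb; have := iterRel (k * k') a b.
rewrite {1}mulnC (iter_mul _ ha) iter_mul // periodic // mulnC periodic //.
lra.
Qed.

Lemma period : iter #[s]%g s =1 id.
Proof. by move=> j; rewrite -permX expg_order perm1. Qed.

Lemma sum_orbits t :
  \sum_j Sm s w j t = t%:R * \sum_j w j.
Proof.
rewrite /Sm exchange_big /=.
rewrite (eq_bigr (fun _ => \sum_j w j)); last first.
  move=> u _; rewrite [RHS](reindex_inj (@perm_inj _ (s ^+ u)%g)) /=.
  by apply: eq_bigr => j _; rewrite permX.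
rewrite sumr_const card_ord; rewrite mulr_natl //.
Qed.

Lemma cp_iter B k f : Mono B s w -> closed_path B k f ->
  iter k s (f 0%N) = f 0%N /\ path_mean B k f = Sm s w (f 0%N) k / k%:R.
Proof.
move=> HB [k0 [fk hf]].
have fs t : (t < k)%N -> f t.+1 = s (f t).
  move=> tk; have := hf t tk; rewrite HB.
  by case: eqP.
have fi t : (t <= k)%N -> f t = iter t s (f 0%N).
  elim: t => [//|t IH] tk; rewrite fs // IH //; exact: ltnW.
split; first by rewrite -fi // fk.
rewrite /path_mean /Sm; congr (_ / _); apply: eq_bigr => t _.
by rewrite fs // HB eqxx /= fi // ltnW.
Qed.

Lemma iter_cp B k a : Mono B s w -> (0 < k)%N -> iter k s a = a ->
  closed_path B k (fun t => iter t s a) /\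
  path_mean B k (fun t => iter t s a) = Sm s w a k / k%:R.
Proof.
move=> HB k0 ha; split.
  split=> //; split=> // t _; by rewrite /= HB eqxx.
by rewrite /path_mean /Sm; congr (_ / _); apply: eq_bigr => t _; rewrite /= HB eqxx.
Qed.

Lemma zero_sum B : Mono B s w ->
  (exists k f, closed_path B k f /\ path_mean B k f = 0) -> \sum_j w j = 0.
Proof.
move=> HB [k [f [cp pm]]].
have [hk hm] := cp_iter HB cp.
have kpos : k%:R != 0 :> R by rewrite pnatr_eq0 -lt0n; case: cp.
have S0 : Sm s w (f 0%N) k = 0.
  by rewrite -(divfK kpos (Sm s w (f 0%N) k)) -hm pm mul0r.
have P0 : #[s]%g%:R != 0 :> R by rewrite pnatr_eq0 -lt0n order_gt0.
have Sj j : Sm s w j #[s]%g = 0.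
  have := eq_means (period j) hk; rewrite S0 mulr0 => /eqP.
  by rewrite mulf_eq0 (negbTE kpos) /= => /eqP.
have := sum_orbits #[s]%g; rewrite (eq_bigr (fun _ => 0)) // big1 // => /esym /eqP.
by rewrite mulf_eq0 (negbTE P0) /= => /eqP.
Qed.

Lemma final B (j0 : 'I_n) : Mono B s w -> \sum_j w j = 0 -> max_cycle_mean_is B 0.
Proof.
move=> HB sw.
set P := #[s]%g.
have P0 : P%:R != 0 :> R by rewrite pnatr_eq0 -lt0n order_gt0.
have Sj j : Sm s w j P = Sm s w j0 P.
  have := eq_means (period j) (period j0) => /eqP.
  by rewrite -subr_eq0 -mulrBr mulf_eq0 (negbTE P0) subr_eq0 /= => /eqP.
have n0 : n%:R != 0 :> R.
  by rewrite pnatr_eq0 -lt0n; apply: leq_ltn_trans (ltn_ord j0).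
have S0 : Sm s w j0 P = 0.
  have := sum_orbits P; rewrite sw mulr0 (eq_bigr (fun _ => Sm s w j0 P)) //.
  rewrite sumr_const card_ord -mulr_natl => /eqP.
  by rewrite mulf_eq0 (negbTE n0) /= => /eqP.
split.
  have [cp pm] := iter_cp HB (order_gt0 s) (period j0).
  by exists P, (fun t => iter t s j0); split=> //; rewrite pm S0 mul0r.
move=> k f cp; have [hk ->] := cp_iter HB cp.
have kpos : k%:R != 0 :> R by rewrite pnatr_eq0 -lt0n; case: cp.
have := eq_means hk (period j0); rewrite S0 mulr0 => /eqP.
by rewrite mulf_eq0 (negbTE P0) /= => /eqP ->; rewrite mul0r.
Qed.

End Orb.
End S.

Theorem lemma7p7 (R : realType) (n : nat) (A : 'M[R]_n) (G H : 'M[option R]_n) :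
  tunit G -> tunit H ->
  tmx_mul (ft_mx A) G = tmx_mul G (ft_mx A) ->
  tmx_mul (ft_mx A) H = tmx_mul H (ft_mx A) ->
  max_cycle_mean_is G 0 -> max_cycle_mean_is H 0 ->
  max_cycle_mean_is (tmx_mul G H) 0.
Proof.
move=> uG uH cG cH [exG _] [exH _].
have [sg [g HG]] := unit_mono uG.
have [sh [h HH]] := unit_mono uH.
have rG := comm_rel HG cG; have rH := comm_rel HH cH.
have sumg := zero_sum rG HG exG.
have sumh := zero_sum rH HH exH.
have [k [f [[k0 _] _]]] := exG.
pose w j := g (sh j) + h j.
have HGH : Mono (tmx_mul G H) (sh * sg)%g w.
  move=> i j; rewrite mxE (big_tadd1 (k0 := sh j)); last first.
    by move=> k1 nk; rewrite HH (negbTE nk); case: (G i k1).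
  by rewrite HH eqxx permM HG; case: ifP.
have rW i j : A ((sh * sg)%g i) ((sh * sg)%g j) + w j = w i + A i j.
  rewrite !permM /w; have := rG (sh i) (sh j); have := rH i j; lra.
apply: (final rW (f 0%N) HGH).
rewrite /w big_split /= sumh.
rewrite -(@reindex_inj _ _ _ _ sh xpredT g (@perm_inj _ sh)) sumg.
by rewrite addr0.
Qed.
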